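(* Let $p\in(0,1)$, $\gamma>0$, $B>0$, $w\in\mathbb{N}$, for each $N\in\mathbb{N}$ let $(\xi_j^{(N)*})_{j=1}^N$ be the unique maximizer of $\mathcal{T}_N$, and let $B^{(N)}=B-\sum_{i=1}^N\xi_i^{(N)*}$. Then $(B^{(N)})_{N\ge1}$ is strictly decreasing in $N$.
   Context: Logarithms are base 2. For an admissible (nonnegative, with sum at most $B$) sequence $(x_j)_{j\ge1}$, $$\mathcal{T}_\infty(x_1,x_2,\dots)=\sum_{k=1}^{w}p^2(1-p)^{k-1}\frac{k}{2}\log_2\!\Big(1+\gamma\frac{B}{k}\Big)+\sum_{j=1}^{\infty}p(1-p)^{j+w-1}\frac12\log_2(1+\gamma x_j)+\sum_{k=1}^{\infty}p^2(1-p)^{k+w-1}\frac{w}{2}\log_2\!\Big(1+\gamma\frac{B-\sum_{j=1}^{k}x_j}{w}\Big).$$ For $N\in\mathbb{N}$ and $\xi_1,\dots,\xi_N\ge0$ with $\sum_{j=1}^N\xi_j\le B$, define $\mathcal{T}_N(\xi_1,\dots,\xi_N)=\mathcal{T}_\infty(\xi_1,\dots,\xi_N,0,0,\dots)$. $\mathcal{T}_N$ has a unique maximizer over this compact set, denoted $(\xi_j^{(N)*})_{j=1}^N$. *)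

(* Defs.v *)
From Stdlib Require Import Reals Lra Lia.
From Coquelicot Require Import Coquelicot.
Open Scope R_scope.

Definition log2 (x : R) : R := ln x / ln 2.

(* fsum f n = f 1 + ... + f n  (1-based finite sum; fsum f 0 = 0) *)
Fixpoint fsum (f : nat -> R) (n : nat) : R :=
  match n with
  | O => 0
  | S m => fsum f m + f (S m)
  end.

(* T_infinity; sequences are 1-based: x j for j >= 1 (x 0 is ignored). *)
Definition T_inf (p gamma B : R) (w : nat) (x : nat -> R) : R :=
  fsum (fun k => p ^ 2 * (1 - p) ^ (k - 1) * (INR k / 2)
                 * log2 (1 + gamma * (B / INR k))) w
  + Series (fun n => let j := S n in
             p * (1 - p) ^ (j + w - 1) * (1 / 2) * log2 (1 + gamma * x j))
  + Series (fun n => let k := S n in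
             p ^ 2 * (1 - p) ^ (k + w - 1) * (INR w / 2)
             * log2 (1 + gamma * ((B - fsum x k) / INR w))).

Definition trunc (N : nat) (xi : nat -> R) : nat -> R :=
  fun j => if (j <=? N)%nat then xi j else 0.

Definition T_N (p gamma B : R) (w N : nat) (xi : nat -> R) : R :=
  T_inf p gamma B w (trunc N xi).

Definition feasible (B : R) (N : nat) (xi : nat -> R) : Prop :=
  (forall j, (1 <= j <= N)%nat -> 0 <= xi j) /\ fsum xi N <= B.

(* xi is the unique maximizer of T_N over the feasible set
   (uniqueness on the coordinates 1..N, the only ones T_N depends on). *)
Definition is_unique_maximizer (p gamma B : R) (w N : nat) (xi : nat -> R) : Prop :=
  feasible B N xi /\
  (forall y, feasible B N y -> T_N p gamma B w N y <= T_N p gamma B w N xi) /\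
  (forall y, feasible B N y -> T_N p gamma B w N xi <= T_N p gamma B w N y ->
     forall j, (1 <= j <= N)%nat -> y j = xi j).

(* Main.v *)
Require Import Defs.
From Stdlib Require Import Reals Lra Lia.
From Coquelicot Require Import Coquelicot.
Open Scope R_scope.

Lemma fsum_ext (f g : nat -> R) n :
  (forall j, (1 <= j <= n)%nat -> f j = g j) -> fsum f n = fsum g n.
Proof.
  induction n; intros H; simpl; auto.
  rewrite IHn by (intros; apply H; lia). rewrite H by lia. auto.
Qed.

Lemma fsum_zero (f : nat -> R) n :
  (forall j, (1 <= j <= n)%nat -> f j = 0) -> fsum f n = 0.
Proof.
  induction n; intros H; simpl; auto.
  rewrite IHn by (intros; apply H; lia). rewrite H by lia. ring.
Qed.

Lemma fsum_point (f : nat -> R) n k :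
  (1 <= k <= n)%nat -> (forall j, (1 <= j <= n)%nat -> j <> k -> f j = 0) -> fsum f n = f k.
Proof.
  induction n; intros Hk H; [lia|]. simpl.
  destruct (Nat.eq_dec k (S n)) as [->|Hne].
  - rewrite fsum_zero. ring. intros; apply H; lia.
  - rewrite IHn by (try lia; intros; apply H; lia). rewrite (H (S n)) by lia. ring.
Qed.

Lemma fsum_two (f : nat -> R) n k :
  (1 <= k)%nat -> (S k <= n)%nat ->
  (forall j, (1 <= j <= n)%nat -> j <> k -> j <> S k -> f j = 0) -> fsum f n = f k + f (S k).
Proof.
  induction n; intros Hk Hkn H; [lia|]. simpl.
  destruct (Nat.eq_dec (S k) (S n)) as [E|Hne].
  - injection E as E. subst n. rewrite (fsum_point f k k) by (try lia; intros; apply H; lia). auto.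
  - rewrite IHn by (try lia; intros; apply H; lia). rewrite (H (S n)) by lia. ring.
Qed.

Lemma fsum_scal (f : nat -> R) c n : fsum (fun j => c * f j) n = c * fsum f n.
Proof. induction n; simpl; [ring|rewrite IHn; ring]. Qed.

Lemma fsum_le (f g : nat -> R) n :
  (forall j, (1 <= j <= n)%nat -> f j <= g j) -> fsum f n <= fsum g n.
Proof.
  induction n; intros H; simpl; [lra|].
  assert (fsum f n <= fsum g n) by (apply IHn; intros; apply H; lia).
  assert (f (S n) <= g (S n)) by (apply H; lia). lra.
Qed.

Lemma fsum_shift (g : nat -> R) m : fsum g (S m) = g 1%nat + fsum (fun k => g (S k)) m.
Proof. induction m; simpl in *; [ring|]. rewrite IHm. ring. Qed.

Lemma series_eventually_geom (a : nat -> R) m c q :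
  Rabs q < 1 -> (forall k, a (m + k)%nat = c * q ^ k) ->
  is_series a (fsum (fun k => a (pred k)) m + c / (1 - q)).
Proof.
  revert a. induction m; intros a Hq H.
  - simpl. eapply is_series_ext.
    + intros n. symmetry. apply (H n).
    + replace (0 + c / (1-q)) with (scal c (/ (1-q))).
      2:{ rewrite Rplus_0_l. reflexivity. }
      apply (is_series_scal c (fun n => q ^ n)). now apply is_series_geom.
  - apply is_series_decr_1.
    specialize (IHm (fun k => a (S k)) Hq (fun k => H k)).
    simpl in IHm.
    match goal with |- is_series _ ?L => assert (E : L
      = fsum (fun k => a (S (pred k))) m + c / (1 - q)) end.
    { rewrite fsum_shift. simpl. unfold plus, opp; simpl.
      rewrite (fsum_ext (fun k => a (S (pred k))) (fun k => a k)).
      2:{ intros j Hj. destruct j; [lia|]. reflexivity. }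
      change (Rplus ?x ?y) with (x + y). change (Ropp ?x) with (- x). ring. }
    rewrite E. exact IHm.
Qed.

Definition aa p w (j : nat) := p * (1-p)^(j+w-1).
Definition bb p w (k : nat) := p^2 * (1-p)^(k+w-1).
Definition FF g y := (1/2) * log2 (1 + g*y).
Definition GG g w R := (INR w / 2) * log2 (1 + g * (R / INR w)).
Definition Psi p g w n (R : nat -> R) :=
  fsum (fun j => aa p w j * FF g (R (j-1)%nat - R j)) n
  + fsum (fun k => bb p w k * GG g w (R k)) (n-1) + aa p w n * GG g w (R n).
Definition res B (x : nat -> R) k := B - fsum x k.
Definition K0 p g B w := fsum (fun k => p ^ 2 * (1 - p) ^ (k - 1) * (INR k / 2)
                 * log2 (1 + g * (B / INR k))) w.

Lemma fsum_trunc n x K : fsum (trunc n x) K = fsum x (Nat.min K n).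
Proof.
  induction K; [reflexivity|]. cbn [fsum].
  rewrite IHK. unfold trunc.
  destruct (Nat.leb_spec (S K) n).
  - replace (Nat.min (S K) n) with (S K) by lia. replace (Nat.min K n) with K by lia. reflexivity.
  - replace (Nat.min (S K) n) with n by lia. replace (Nat.min K n) with n by lia. ring.
Qed.

Lemma res_diff B x j : (1 <= j)%nat -> res B x (j-1)%nat - res B x j = x j.
Proof. intros. destruct j; [lia|]. unfold res. simpl. replace (j-0)%nat with j by lia. ring. Qed.

Lemma closed_form p g B w n x : 0 < p < 1 -> (1 <= n)%nat ->
  T_N p g B w n x = K0 p g B w + Psi p g w n (res B x).
Proof.
  intros Hp Hn. unfold T_N, T_inf, Psi, K0.
  assert (Hq : Rabs (1-p) < 1) by (rewrite Rabs_pos_eq; lra).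
  set (u := fun n0 : nat => let j := S n0 in
          p * (1 - p) ^ (j + w - 1) * (1 / 2) * log2 (1 + g * trunc n x j)).
  set (v := fun n0 : nat => let k := S n0 in
          p ^ 2 * (1 - p) ^ (k + w - 1) * (INR w / 2) *
          log2 (1 + g * ((B - fsum (trunc n x) k) / INR w))).
  assert (Hu : is_series u (fsum (fun k => u (pred k)) n + 0 / (1 - (1-p)))).
  { apply series_eventually_geom; auto. intros k. unfold u, trunc.
    destruct (Nat.leb_spec (S (n+k)) n); [lia|].
    rewrite Rmult_0_r, Rplus_0_r. unfold log2. rewrite ln_1. unfold Rdiv. ring. }
  set (L := p ^ 2 * (1 - p) ^ (n + w - 1) * (INR w / 2) *
          log2 (1 + g * ((B - fsum x n) / INR w))).
  assert (Hv : is_series v (fsum (fun k => v (pred k)) (n-1) + L / (1 - (1-p)))).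
  { apply series_eventually_geom; auto. intros k. unfold v, L.
    rewrite fsum_trunc. replace (Nat.min (S (n - 1 + k)) n) with n by lia.
    replace (S (n - 1 + k) + w - 1)%nat with ((n + w - 1) + k)%nat by lia.
    rewrite pow_add. ring. }
  rewrite (is_series_unique _ _ Hu), (is_series_unique _ _ Hv).
  assert (E1 : fsum (fun k => u (pred k)) n =
     fsum (fun j => aa p w j * FF g (res B x (j - 1)%nat - res B x j)) n).
  { apply fsum_ext. intros j Hj. rewrite res_diff by lia.
    unfold u, aa, FF, trunc. replace (S (pred j)) with j by lia.
    destruct (Nat.leb_spec j n); [|lia]. ring. }
  assert (E2 : fsum (fun k => v (pred k)) (n-1) =
     fsum (fun k => bb p w k * GG g w (res B x k)) (n-1)).
  { apply fsum_ext. intros j Hj.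
    unfold v, bb, GG, res. replace (S (pred j)) with j by lia.
    rewrite fsum_trunc. replace (Nat.min j n) with j by lia. ring. }
  rewrite E1, E2. unfold L, aa, GG, res. field. lra.
Qed.

Definition adm B n (R : nat -> R) :=
  R 0%nat = B /\ (forall j, (1 <= j <= n)%nat -> R j <= R (j-1)%nat) /\ 0 <= R n.
Definition x_of (R : nat -> R) j := R (j-1)%nat - R j.

Lemma fsum_x_of (Q : nat -> R) k : fsum (x_of Q) k = Q 0%nat - Q k.
Proof.
  induction k; cbn [fsum]; [ring|]. rewrite IHk. unfold x_of. replace (S k - 1)%nat with k by lia. ring.
Qed.

Lemma Psi_ext p g w n R1 R2 : (forall k, (k <= n)%nat -> R1 k = R2 k) ->
  Psi p g w n R1 = Psi p g w n R2.
Proof.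
  intros H. unfold Psi.
  rewrite (fsum_ext (fun j => aa p w j * FF g (R1 (j - 1)%nat - R1 j))
                    (fun j => aa p w j * FF g (R2 (j - 1)%nat - R2 j))).
  2:{ intros j Hj. rewrite !H by lia. reflexivity. }
  rewrite (fsum_ext (fun k => bb p w k * GG g w (R1 k)) (fun k => bb p w k * GG g w (R2 k))).
  2:{ intros j Hj. rewrite !H by lia. reflexivity. }
  rewrite H by lia. reflexivity.
Qed.

Lemma adm_mono B n R : adm B n R -> forall i k, (i <= k <= n)%nat -> R k <= R i.
Proof.
  intros [H0 [Hm Hn]] i k Hik. destruct Hik as [Hik Hkn].
  induction Hik; [lra|].
  assert (R (S m) <= R (S m - 1)%nat) by (apply Hm; lia).
  replace (S m - 1)%nat with m in H by lia.
  assert (R m <= R i) by (apply IHHik; lia). lra.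
Qed.

Lemma adm_nonneg B n R : adm B n R -> forall k, (k <= n)%nat -> 0 <= R k.
Proof.
  intros Ha k Hk. pose proof (adm_mono B n R Ha k n ltac:(lia)). destruct Ha as [_ [_ Hn]]. lra.
Qed.

Lemma opt_R p g B w n x : 0 < p < 1 -> (1 <= n)%nat ->
  is_unique_maximizer p g B w n x ->
  adm B n (res B x) /\ forall R', adm B n R' -> Psi p g w n R' <= Psi p g w n (res B x).
Proof.
  intros Hp Hn [[Hf Hs] [Hmax _]]. split.
  - split; [unfold res; simpl; ring|]. split.
    + intros j Hj. pose proof (res_diff B x j ltac:(lia)). pose proof (Hf j Hj). lra.
    + unfold res. lra.
  - intros R' [H0 [Hm HRn]].
    assert (Hfe : feasible B n (x_of R')).
    { split.
      - intros j Hj. unfold x_of. pose proof (Hm j Hj). lra.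
      - rewrite fsum_x_of. lra. }
    pose proof (Hmax _ Hfe) as Hle.
    rewrite !closed_form in Hle by auto.
    rewrite (Psi_ext p g w n R' (res B (x_of R'))). lra.
    intros k Hk. unfold res. rewrite fsum_x_of. lra.
Qed.

Definition cc g := g / (2 * ln 2).
Definition uu g y := / (1 + g * y).
Definition vv g w R := / (1 + g * (R / INR w)).

Lemma termF a g y t : 0 < 1 + g*y ->
  is_derive (fun e => a * FF g (y + e*t)) 0 (a * (cc g * t * uu g y)).
Proof.
  intros H. unfold FF, log2, cc, uu. auto_derive.
  - rewrite Rmult_0_l, Rplus_0_r. auto.
  - rewrite Rmult_0_l, Rplus_0_r. field. split; [lra|]. pose proof ln_lt_2. lra.
Qed.

Lemma termG a g w R t : 0 < INR w -> 0 < 1 + g*(R / INR w) ->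
  is_derive (fun e => a * GG g w (R + e*t)) 0 (a * (cc g * t * vv g w R)).
Proof.
  intros Hw H. unfold GG, log2, cc, vv. auto_derive.
  - rewrite Rmult_0_l, Rplus_0_r. auto.
  - rewrite Rmult_0_l, Rplus_0_r. pose proof ln_lt_2. field. repeat split; try lra.
    assert (E : INR w + g * R = INR w * (1 + g*(R/INR w))) by (field; lra).
    rewrite E. apply Rgt_not_eq. apply Rmult_lt_0_compat; lra.
Qed.

Lemma fsum_der (h : nat -> R -> R) (dh : nat -> R) n :
  (forall j, (1 <= j <= n)%nat -> is_derive (h j) 0 (dh j)) ->
  is_derive (fun e => fsum (fun j => h j e) n) 0 (fsum dh n).
Proof.
  induction n; intros H; simpl.
  - apply (is_derive_const (V := R_NormedModule) 0 0).
  - apply (is_derive_plus (V := R_NormedModule)).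
    + apply IHn. intros; apply H; lia.
    + apply H; lia.
Qed.

Definition DPsi p g w n (R d : nat -> R) :=
  fsum (fun j => aa p w j * (cc g * (d (j-1)%nat - d j) * uu g (R (j-1)%nat - R j))) n
  + fsum (fun k => bb p w k * (cc g * d k * vv g w (R k))) (n-1)
  + aa p w n * (cc g * d n * vv g w (R n)).

Lemma Psi_der p g w B n R d : 0 < g -> (1 <= w)%nat -> adm B n R ->
  is_derive (fun e => Psi p g w n (fun k => R k + e * d k)) 0 (DPsi p g w n R d).
Proof.
  intros Hg Hw Ha.
  assert (Hw' : 0 < INR w) by (apply lt_0_INR; lia).
  pose proof (adm_nonneg B n R Ha) as Hnn.
  destruct Ha as [H0 [Hm Hn]].
  unfold Psi, DPsi.
  apply (is_derive_plus (V := R_NormedModule)).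
  apply (is_derive_plus (V := R_NormedModule)).
  - apply (fsum_der (fun j e => aa p w j * FF g (R (j - 1)%nat + e * d (j - 1)%nat - (R j + e * d j)))).
    intros j Hj. eapply is_derive_ext.
    2:{ apply termF. pose proof (Hm j Hj). nra. }
    intros e. simpl. f_equal. f_equal. ring.
  - apply (fsum_der (fun k e => bb p w k * GG g w (R k + e * d k))).
    intros j Hj. apply termG; auto.
    pose proof (Hnn j ltac:(lia)). apply Rplus_lt_le_0_compat; [lra|].
    apply Rmult_le_pos; [lra|]. apply Rdiv_le_0_compat; lra.
  - apply termG; auto. apply Rplus_lt_le_0_compat; [lra|].
    apply Rmult_le_pos; [lra|]. apply Rdiv_le_0_compat; lra.
Qed.

Lemma one_sided (phi : R -> R) l delta : is_derive phi 0 l -> 0 < delta ->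
  (forall e, 0 < e < delta -> phi e <= phi 0) -> l <= 0.
Proof.
  intros Hd Hdel H. apply is_derive_Reals in Hd.
  destruct (Rle_or_lt l 0) as [|Hl]; auto. exfalso.
  destruct (Hd l Hl) as [del Hdl].
  set (h := Rmin (pos del) delta / 2).
  assert (Hh : 0 < h < delta /\ h < del).
  { unfold h. pose proof (cond_pos del). pose proof (Rmin_l del delta). pose proof (Rmin_r del delta).
    pose proof (Rmin_glb_lt del delta 0 ltac:(lra) ltac:(lra)). lra. }
  assert (Hh0 : h <> 0) by lra.
  assert (Habs : Rabs h < del) by (rewrite Rabs_pos_eq; lra).
  specialize (Hdl h Hh0 Habs). rewrite Rplus_0_l in Hdl.
  specialize (H h ltac:(lra)).
  apply Rabs_def2 in Hdl. destruct Hdl as [_ Hlow].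
  assert (Hq : (phi h - phi 0) / h <= 0).
  { unfold Rdiv. assert (/ h > 0) by (apply Rinv_0_lt_compat; lra). nra. }
  lra.
Qed.

Definition Opt p g w B n R := adm B n R /\ forall R', adm B n R' -> Psi p g w n R' <= Psi p g w n R.

Lemma perturb p g w B n R d delta : 0 < g -> (1 <= w)%nat -> Opt p g w B n R -> 0 < delta ->
  (forall e, 0 < e < delta -> adm B n (fun k => R k + e * d k)) -> DPsi p g w n R d <= 0.
Proof.
  intros Hg Hw [Ha Ho] Hd Hadm.
  apply (one_sided (fun e => Psi p g w n (fun k => R k + e * d k)) _ delta); auto.
  - eapply Psi_der; eauto.
  - intros e He. rewrite (Psi_ext p g w n (fun k => R k + 0 * d k) R) by (intros; ring).
    apply Ho. apply Hadm. auto.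
Qed.

Definition ek k s := fun i => if Nat.eqb i k then s else 0.
Definition step i s := fun k => if Nat.leb i k then s else 0.

Lemma aa_succ p w k : (1 <= w)%nat -> aa p w (S k) = (1-p) * aa p w k.
Proof. intros. unfold aa. replace (S k + w - 1)%nat with (S (k + w - 1)) by lia. simpl. ring. Qed.

Lemma bb_aa p w k : bb p w k = p * aa p w k.
Proof. unfold aa, bb. ring. Qed.

Lemma aa_pos p w k : 0 < p < 1 -> 0 < aa p w k.
Proof. intros. unfold aa. apply Rmult_lt_0_compat; [lra|]. apply pow_lt. lra. Qed.

Lemma cc_pos g : 0 < g -> 0 < cc g.
Proof. intros. unfold cc. pose proof ln_lt_2. apply Rdiv_lt_0_compat; lra. Qed.

Lemma weights p w i n : (1 <= w)%nat -> (1 <= i <= n)%nat ->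
  fsum (fun k => if Nat.leb i k then bb p w k else 0) (n-1) + aa p w n = aa p w i.
Proof.
  intros Hw Hi. replace n with (i + (n - i))%nat by lia. generalize (n - i)%nat as m.
  induction m.
  - rewrite fsum_zero. rewrite Nat.add_0_r. ring.
    intros j Hj. destruct (Nat.leb_spec i j); [lia|auto].
  - replace (i + S m - 1)%nat with (S (i + m - 1)) by lia. cbn [fsum].
    replace (S (i + m - 1)) with (i + m)%nat by lia.
    destruct (Nat.leb_spec i (i+m)); [|lia].
    replace (i + S m)%nat with (S (i + m)) by lia. rewrite aa_succ by auto. rewrite bb_aa.
    rewrite <- IHm. ring.
Qed.

Lemma DPsi_ek_mid p g w n R k s : (1 <= k)%nat -> (S k <= n)%nat ->
  DPsi p g w n R (ek k s) = cc g * s * (- aa p w k * uu g (R (k-1)%nat - R k)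
     + aa p w (S k) * uu g (R k - R (S k)) + bb p w k * vv g w (R k)).
Proof.
  intros Hk Hkn. unfold DPsi.
  rewrite (fsum_two _ n k) by (try lia; intros j Hj H1 H2; unfold ek;
     destruct (Nat.eqb_spec (j-1) k); destruct (Nat.eqb_spec j k); try lia; ring).
  rewrite (fsum_point _ (n-1) k) by (try lia; intros j Hj H1; unfold ek;
     destruct (Nat.eqb_spec j k); try lia; ring).
  unfold ek. replace (S k - 1)%nat with k by lia.
  destruct (Nat.eqb_spec (k-1) k); [lia|]. destruct (Nat.eqb_spec k k); [|lia].
  destruct (Nat.eqb_spec (S k) k); [lia|]. destruct (Nat.eqb_spec n k); [lia|]. ring.
Qed.

Lemma DPsi_ek_end p g w n R s : (1 <= n)%nat ->
  DPsi p g w n R (ek n s) = cc g * s * (- aa p w n * uu g (R (n-1)%nat - R n)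
     + aa p w n * vv g w (R n)).
Proof.
  intros Hn. unfold DPsi.
  rewrite (fsum_point _ n n) by (try lia; intros j Hj H1; unfold ek;
     destruct (Nat.eqb_spec (j-1) n); destruct (Nat.eqb_spec j n); try lia; ring).
  rewrite fsum_zero by (intros j Hj; unfold ek; destruct (Nat.eqb_spec j n); try lia; ring).
  unfold ek. destruct (Nat.eqb_spec (n-1) n); [lia|]. destruct (Nat.eqb_spec n n); [|lia]. ring.
Qed.

Lemma DPsi_step p g w n R i s : (1 <= i <= n)%nat ->
  DPsi p g w n R (step i s) = - aa p w i * cc g * s * uu g (R (i-1)%nat - R i)
    + fsum (fun k => bb p w k * (cc g * step i s k * vv g w (R k))) (n-1)
    + aa p w n * (cc g * s * vv g w (R n)).
Proof.
  intros Hi. unfold DPsi.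
  rewrite (fsum_point _ n i) by (try lia; intros j Hj H1; unfold step;
     destruct (Nat.leb_spec i (j-1)); destruct (Nat.leb_spec i j); try lia; ring).
  unfold step at 1 2 4. destruct (Nat.leb_spec i (i-1)); [lia|]. destruct (Nat.leb_spec i i); [|lia].
  destruct (Nat.leb_spec i n); [|lia]. ring.
Qed.

Lemma uu_0 g : uu g 0 = 1.
Proof. unfold uu. rewrite Rmult_0_r, Rplus_0_r. apply Rinv_1. Qed.
Lemma vv_0 g w : vv g w 0 = 1.
Proof. unfold vv. unfold Rdiv. rewrite Rmult_0_l, Rmult_0_r, Rplus_0_r. apply Rinv_1. Qed.

Lemma inv_le1 x : 1 <= x -> 0 < / x <= 1.
Proof.
  intros. split. apply Rinv_0_lt_compat; lra.
  rewrite <- Rinv_1. apply Rinv_le_contravar; lra.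
Qed.
Lemma inv_lt1 x : 1 < x -> / x < 1.
Proof. intros. rewrite <- Rinv_1. apply Rinv_lt_contravar; lra. Qed.

Lemma wpos w : (1 <= w)%nat -> 0 < INR w.
Proof. intros. apply lt_0_INR. lia. Qed.

Lemma uu_le1 g y : 0 < g -> 0 <= y -> 0 < uu g y <= 1.
Proof. intros. unfold uu. apply inv_le1. nra. Qed.
Lemma uu_lt1 g y : 0 < g -> 0 < y -> uu g y < 1.
Proof. intros. unfold uu. apply inv_lt1. nra. Qed.
Lemma divw_nonneg R w : (1 <= w)%nat -> 0 <= R -> 0 <= R / INR w.
Proof. intros. pose proof (wpos w H). apply Rdiv_le_0_compat; lra. Qed.
Lemma divw_pos R w : (1 <= w)%nat -> 0 < R -> 0 < R / INR w.
Proof. intros. pose proof (wpos w H). apply Rdiv_lt_0_compat; lra. Qed.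
Lemma vv_le1 g w R : 0 < g -> (1 <= w)%nat -> 0 <= R -> 0 < vv g w R <= 1.
Proof. intros. unfold vv. apply inv_le1. pose proof (divw_nonneg R w H0 H1). nra. Qed.
Lemma vv_lt1 g w R : 0 < g -> (1 <= w)%nat -> 0 < R -> vv g w R < 1.
Proof. intros. unfold vv. apply inv_lt1. pose proof (divw_pos R w H0 H1). nra. Qed.
Lemma vv_anti g w R1 R2 : 0 < g -> (1 <= w)%nat -> 0 <= R1 -> R1 <= R2 -> vv g w R2 <= vv g w R1.
Proof.
  intros. unfold vv. pose proof (divw_nonneg R1 w H0 H1). pose proof (wpos w H0).
  assert (R1 / INR w <= R2 / INR w) by (apply Rmult_le_compat_r; [left; apply Rinv_0_lt_compat; lra| lra]).
  apply Rinv_le_contravar; nra.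
Qed.
Lemma vv_anti_strict g w R1 R2 : 0 < g -> (1 <= w)%nat -> 0 <= R1 -> R1 < R2 -> vv g w R2 < vv g w R1.
Proof.
  intros. unfold vv. pose proof (divw_nonneg R1 w H0 H1). pose proof (wpos w H0).
  assert (R1 / INR w < R2 / INR w) by (apply Rmult_lt_compat_r; [apply Rinv_0_lt_compat; lra| lra]).
  assert (g * (R1/INR w) < g*(R2/INR w)) by (apply Rmult_lt_compat_l; lra).
  assert (0 <= g * (R1/INR w)) by (apply Rmult_le_pos; lra).
  apply Rinv_lt_contravar; [apply Rmult_lt_0_compat|]; lra.
Qed.
Lemma uu_inj_lt g a b : 0 < g -> 0 <= a -> 0 <= b -> uu g a < uu g b -> b < a.
Proof.
  intros Hg Ha Hb H. unfold uu in H. destruct (Rle_or_lt a b) as [Hab|]; auto.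
  exfalso. assert (/ (1 + g*b) <= / (1 + g*a)) by (apply Rinv_le_contravar; nra). lra.
Qed.

Lemma adm_ek B n R k s e : adm B n R -> (1 <= k <= n)%nat ->
  R k + e * s <= R (k-1)%nat -> ((k < n)%nat -> R (S k) <= R k + e * s) ->
  (k = n -> 0 <= R n + e * s) -> adm B n (fun i => R i + e * ek k s i).
Proof.
  intros [H0 [Hm Hn]] Hk H1 H2 H3. unfold ek. split; [|split].
  - destruct (Nat.eqb_spec 0 k); [lia|]. rewrite H0. ring.
  - intros j Hj. destruct (Nat.eqb_spec j k); destruct (Nat.eqb_spec (j-1) k); try lia.
    + subst j. lra.
    + replace j with (S k) by lia. replace (S k - 1)%nat with k by lia.
      assert (R (S k) <= R k + e * s) by (apply H2; lia). lra.
    + pose proof (Hm j Hj). lra.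
  - destruct (Nat.eqb_spec n k).
    + apply H3; lia.
    + lra.
Qed.

Lemma adm_step B n R i s e : adm B n R -> (1 <= i <= n)%nat ->
  R i + e * s <= R (i-1)%nat -> 0 <= R n + e * s -> adm B n (fun k => R k + e * step i s k).
Proof.
  intros [H0 [Hm Hn]] Hi H1 H2. unfold step. split; [|split].
  - destruct (Nat.leb_spec i 0); [lia|]. rewrite H0. ring.
  - intros j Hj. pose proof (Hm j Hj).
    destruct (Nat.leb_spec i j); destruct (Nat.leb_spec i (j-1)); try lia; try lra.
    replace j with i by lia. lra.
  - destruct (Nat.leb_spec i n); [lra|lia].
Qed.

Lemma exists_drop (R : nat -> R) n : 0 < R 0%nat -> R n <= 0 ->
  exists i, (1 <= i <= n)%nat /\ 0 < R (i-1)%nat /\ R i <= 0.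
Proof.
  induction n; intros H0 Hn; [lra|].
  destruct (Rlt_or_le 0 (R n)) as [Hp|Hp].
  - exists (S n). replace (S n - 1)%nat with n by lia. split; [lia|]. auto.
  - destruct (IHn H0 Hp) as [i [Hi1 Hi2]]. exists i. split; [lia|auto].
Qed.

Lemma final_pos p g w B n R : 0 < p < 1 -> 0 < g -> (1 <= w)%nat -> 0 < B -> (1 <= n)%nat ->
  Opt p g w B n R -> 0 < R n.
Proof.
  intros Hp Hg Hw HB Hn HO. pose proof HO as [Ha Ho].
  destruct (Rlt_or_le 0 (R n)) as [|Hle]; auto. exfalso.
  pose proof (adm_nonneg B n R Ha n ltac:(lia)) as Hn0.
  assert (Rn0 : R n = 0) by lra.
  destruct Ha as [H0 [Hm HRn]].
  destruct (exists_drop R n ltac:(lra) Hle) as [i [Hi [Hi1 Hi2]]].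
  assert (Ha : adm B n R) by (split; auto).
  assert (Hz : forall k, (i <= k <= n)%nat -> R k = 0).
  { intros k Hk. pose proof (adm_mono B n R Ha i k Hk). pose proof (adm_nonneg B n R Ha k ltac:(lia)). lra. }
  assert (HD := perturb p g w B n R (step i 1) (R (i-1)%nat - R i) Hg Hw HO ltac:(lra)).
  assert (HD' : DPsi p g w n R (step i 1) <= 0).
  { apply HD. intros e He. apply adm_step; auto; lra. }
  rewrite DPsi_step in HD' by lia.
  rewrite (fsum_ext _ (fun k => cc g * (if Nat.leb i k then bb p w k else 0))) in HD'.
  2:{ intros k Hk. unfold step. destruct (Nat.leb_spec i k).
      - rewrite (Hz k) by lia. rewrite vv_0. ring.
      - ring. }
  rewrite fsum_scal in HD'.
  pose proof (weights p w i n Hw Hi) as HW.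
  rewrite Rn0, vv_0 in HD'.
  pose proof (uu_lt1 g (R (i - 1)%nat - R i) Hg ltac:(lra)) as HU.
  pose proof (cc_pos g Hg). pose proof (aa_pos p w i Hp).
  set (U := uu g (R (i - 1)%nat - R i)) in *.
  set (W := fsum (fun k => if Nat.leb i k then bb p w k else 0) (n - 1)) in *.
  assert (E : - aa p w i * cc g * 1 * U + cc g * W + aa p w n * (cc g * 1 * 1)
           = cc g * aa p w i * (1 - U)).
  { replace W with (aa p w i - aa p w n) by lra. ring. }
  rewrite E in HD'.
  assert (0 < cc g * aa p w i * (1 - U)) by (apply Rmult_lt_0_compat; [apply Rmult_lt_0_compat|]; lra).
  lra.
Qed.

Lemma interior p g w B n R : 0 < p < 1 -> 0 < g -> (1 <= w)%nat -> (1 <= n)%nat ->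
  Opt p g w B n R -> 0 < R n -> forall j, (1 <= j <= n)%nat -> 0 < R (j-1)%nat - R j.
Proof.
  intros Hp Hg Hw Hn HO HRn j Hj. pose proof HO as [Ha Ho].
  destruct (Rlt_or_le 0 (R (j-1)%nat - R j)) as [|Hle]; auto. exfalso.
  pose proof Ha as [H0 [Hm HRn0]].
  pose proof (Hm j Hj).
  assert (Hx0 : R (j - 1)%nat - R j = 0) by lra.
  assert (HD := perturb p g w B n R (step j (-1)) (R n) Hg Hw HO HRn).
  assert (HD' : DPsi p g w n R (step j (-1)) <= 0).
  { apply HD. intros e He. apply adm_step; auto; lra. }
  rewrite DPsi_step in HD' by lia. rewrite Hx0, uu_0 in HD'.
  set (V := vv g w (R n)) in *.
  pose proof (cc_pos g Hg) as Hc. pose proof (aa_pos p w j Hp) as Haj.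
  assert (HL : fsum (fun k => cc g * (- V * (if Nat.leb j k then bb p w k else 0))) (n - 1)
     <= fsum (fun k => bb p w k * (cc g * step j (-1) k * vv g w (R k))) (n - 1)).
  { apply fsum_le. intros k Hk. unfold step. destruct (Nat.leb_spec j k).
    - pose proof (adm_mono B n R Ha k n ltac:(lia)).
      pose proof (vv_anti g w (R n) (R k) Hg Hw HRn0 H2).
      assert (0 <= bb p w k) by (rewrite bb_aa; pose proof (aa_pos p w k Hp); nra).
      fold V in H3.
      assert (cc g * bb p w k * vv g w (R k) <= cc g * bb p w k * V).
      { apply Rmult_le_compat_l; [nra|lra]. }
      nra.
    - lra. }
  rewrite fsum_scal, fsum_scal in HL.
  pose proof (weights p w j n Hw Hj) as HW.
  pose proof (vv_lt1 g w (R n) Hg Hw HRn) as HV. fold V in HV.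
  set (W := fsum (fun k => if Nat.leb j k then bb p w k else 0) (n - 1)) in *.
  set (S := fsum (fun k => bb p w k * (cc g * step j (-1) k * vv g w (R k))) (n - 1)) in *.
  assert (E : cc g * (- V * W) = - cc g * V * aa p w j + cc g * V * aa p w n).
  { replace W with (aa p w j - aa p w n) by lra. ring. }
  assert (0 < cc g * aa p w j * (1 - V)) by (apply Rmult_lt_0_compat; [apply Rmult_lt_0_compat|]; lra).
  assert (E2 : - aa p w j * cc g * -1 * 1 + S + aa p w n * (cc g * -1 * V)
     = cc g * aa p w j + S - cc g * V * aa p w n) by ring.
  rewrite E2 in HD'. lra.
Qed.

Lemma pos_mul_le0 a b : 0 < a -> a * b <= 0 -> b <= 0.
Proof. intros. destruct (Rle_or_lt b 0); auto. assert (0 < a * b) by (apply Rmult_lt_0_compat; lra). lra. Qed.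

Lemma Kminus p g w B n R k : 0 < p < 1 -> 0 < g -> (1 <= w)%nat -> (1 <= k)%nat -> (S k <= n)%nat ->
  Opt p g w B n R ->
  (1-p) * uu g (R k - R (S k)) + p * vv g w (R k) <= uu g (R (k-1)%nat - R k).
Proof.
  intros Hp Hg Hw Hk Hkn HO. pose proof HO as [Ha Ho]. pose proof Ha as [H0 [Hm HRn]].
  pose proof (Hm k ltac:(lia)) as Hk1. pose proof (Hm (S k) ltac:(lia)) as Hk2.
  replace (S k - 1)%nat with k in Hk2 by lia.
  pose proof (adm_nonneg B n R Ha k ltac:(lia)) as HRk.
  destruct (Rlt_or_le 0 (R (k-1)%nat - R k)) as [Hx|Hx].
  - assert (HD' : DPsi p g w n R (ek k 1) <= 0).
    { apply (perturb p g w B n R (ek k 1) (R (k-1)%nat - R k)); auto.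
      intros e He. apply adm_ek; auto; try lia; intros; lra. }
    rewrite DPsi_ek_mid in HD' by lia. rewrite aa_succ, bb_aa in HD' by auto.
    pose proof (cc_pos g Hg). pose proof (aa_pos p w k Hp).
    apply Rminus_le. apply (pos_mul_le0 (cc g * aa p w k)). apply Rmult_lt_0_compat; lra.
    match type of HD' with ?L <= 0 => replace (cc g * aa p w k * ((1 - p) * uu g (R k - R (S k)) + p * vv g w (R k) -
   uu g (R (k - 1)%nat - R k))) with L by ring end. auto.
  - replace (R (k-1)%nat - R k) with 0 by lra. rewrite uu_0.
    pose proof (uu_le1 g (R k - R (S k)) Hg ltac:(lra)). pose proof (vv_le1 g w (R k) Hg Hw HRk). nra.
Qed.

Lemma Tminus p g w B n R : 0 < p < 1 -> 0 < g -> (1 <= w)%nat -> (1 <= n)%nat ->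
  Opt p g w B n R -> vv g w (R n) <= uu g (R (n-1)%nat - R n).
Proof.
  intros Hp Hg Hw Hn HO. pose proof HO as [Ha Ho]. pose proof Ha as [H0 [Hm HRn]].
  pose proof (Hm n ltac:(lia)) as Hk1.
  destruct (Rlt_or_le 0 (R (n-1)%nat - R n)) as [Hx|Hx].
  - assert (HD' : DPsi p g w n R (ek n 1) <= 0).
    { apply (perturb p g w B n R (ek n 1) (R (n-1)%nat - R n)); auto.
      intros e He. apply adm_ek; auto; try lia; intros; lra. }
    rewrite DPsi_ek_end in HD' by lia.
    pose proof (cc_pos g Hg). pose proof (aa_pos p w n Hp).
    apply Rminus_le. apply (pos_mul_le0 (cc g * aa p w n)). apply Rmult_lt_0_compat; lra.
    match type of HD' with ?L <= 0 => replace (cc g * aa p w n * (vv g w (R n) - uu g (R (n - 1)%nat - R n))) with L by ring end. auto.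
  - replace (R (n-1)%nat - R n) with 0 by lra. rewrite uu_0.
    pose proof (vv_le1 g w (R n) Hg Hw HRn). lra.
Qed.

Lemma Kplus p g w B n R k : 0 < p < 1 -> 0 < g -> (1 <= w)%nat -> (1 <= k)%nat -> (S k <= n)%nat ->
  Opt p g w B n R -> 0 < R k - R (S k) ->
  uu g (R (k-1)%nat - R k) <= (1-p) * uu g (R k - R (S k)) + p * vv g w (R k).
Proof.
  intros Hp Hg Hw Hk Hkn HO Hx. pose proof HO as [Ha Ho]. pose proof Ha as [H0 [Hm HRn]].
  pose proof (Hm k ltac:(lia)) as Hk1.
  assert (HD' : DPsi p g w n R (ek k (-1)) <= 0).
  { apply (perturb p g w B n R (ek k (-1)) (R k - R (S k))); auto.
    intros e He. apply adm_ek; auto; try lia; intros; lra. }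
  rewrite DPsi_ek_mid in HD' by lia. rewrite aa_succ, bb_aa in HD' by auto.
  pose proof (cc_pos g Hg). pose proof (aa_pos p w k Hp).
  apply Rminus_le. apply (pos_mul_le0 (cc g * aa p w k)). apply Rmult_lt_0_compat; lra.
  match type of HD' with ?L <= 0 => replace (cc g * aa p w k * (uu g (R (k - 1)%nat - R k) -
    ((1 - p) * uu g (R k - R (S k)) + p * vv g w (R k)))) with L by ring end. auto.
Qed.

Lemma Tplus p g w B n R : 0 < p < 1 -> 0 < g -> (1 <= w)%nat -> (1 <= n)%nat ->
  Opt p g w B n R -> 0 < R n -> uu g (R (n-1)%nat - R n) <= vv g w (R n).
Proof.
  intros Hp Hg Hw Hn HO Hx. pose proof HO as [Ha Ho]. pose proof Ha as [H0 [Hm HRn]].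
  pose proof (Hm n ltac:(lia)) as Hk1.
  assert (HD' : DPsi p g w n R (ek n (-1)) <= 0).
  { apply (perturb p g w B n R (ek n (-1)) (R n)); auto.
    intros e He. apply adm_ek; auto; try lia; intros; lra. }
  rewrite DPsi_ek_end in HD' by lia.
  pose proof (cc_pos g Hg). pose proof (aa_pos p w n Hp).
  apply Rminus_le. apply (pos_mul_le0 (cc g * aa p w n)). apply Rmult_lt_0_compat; lra.
  match type of HD' with ?L <= 0 => replace (cc g * aa p w n * (uu g (R (n - 1)%nat - R n) - vv g w (R n))) with L by ring end. auto.
Qed.

Theorem lemma8 (p gamma B : R) (w : nat) (xs : nat -> nat -> R)
  (hp : 0 < p < 1) (hg : 0 < gamma) (hB : 0 < B) (hw : (1 <= w)%nat)
  (hmax : forall N : nat, (1 <= N)%nat -> is_unique_maximizer p gamma B w N (xs N)) :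
  forall N : nat, (1 <= N)%nat ->
    B - fsum (xs (S N)) (S N) < B - fsum (xs N) N.
Proof.
  intros N HN.
  set (A := res B (xs N)). set (C := res B (xs (S N))).
  change (C (S N) < A N).
  assert (OA : Opt p gamma w B N A).
  { destruct (opt_R p gamma B w N (xs N) hp HN (hmax N HN)). split; auto. }
  assert (OC : Opt p gamma w B (S N) C).
  { destruct (opt_R p gamma B w (S N) (xs (S N)) hp ltac:(lia) (hmax (S N) ltac:(lia))). split; auto. }
  destruct (Rlt_or_le (C (S N)) (A N)) as [|H]; auto. exfalso.
  pose proof OA as [HaA _]. pose proof OC as [HaC _].
  pose proof HaA as [A0 [Am An]]. pose proof HaC as [C0 [Cm Cn]].
  assert (HCpos : 0 < C (S N)) by (apply (final_pos p gamma w B (S N)); auto; lia).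
  pose proof (interior p gamma w B (S N) C hp hg hw ltac:(lia) OC HCpos) as Cint.
  assert (Anonneg : forall k, (k <= N)%nat -> 0 <= A k) by (apply adm_nonneg with B; auto).
  assert (Cnonneg : forall k, (k <= S N)%nat -> 0 <= C k) by (apply adm_nonneg with B; auto).
  assert (AxN : forall k, (1 <= k <= N)%nat -> 0 <= A (k-1)%nat - A k) by (intros k Hk; pose proof (Am k Hk); lra).
  assert (CxN : forall k, (1 <= k <= S N)%nat -> 0 < C (k-1)%nat - C k) by (intros; apply Cint; lia).
  assert (Drop : forall k, (1 <= k <= N)%nat -> A k < C k ->
            uu gamma (C (k-1)%nat - C k) < uu gamma (A (k-1)%nat - A k) ->
            A (k-1)%nat < C (k-1)%nat).
  { intros k Hk H1 H2. pose proof (AxN k Hk). pose proof (CxN k ltac:(lia)).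
    pose proof (uu_inj_lt gamma (C (k-1)%nat - C k) (A (k-1)%nat - A k) hg ltac:(lra) ltac:(lra) H2). lra. }
  assert (Step : forall k, (2 <= k <= N)%nat -> A k < C k ->
            uu gamma (C (k-1)%nat - C k) < uu gamma (A (k-1)%nat - A k) ->
            A (k-1)%nat < C (k-1)%nat /\
            uu gamma (C (k-1-1)%nat - C (k-1)%nat) < uu gamma (A (k-1-1)%nat - A (k-1)%nat)).
  { intros k Hk H1 H2. pose proof (Drop k ltac:(lia) H1 H2) as Hd. split; auto.
    set (m := (k-1)%nat) in *. replace k with (S m) in * by lia.
    pose proof (Kplus p gamma w B (S N) C m hp hg hw ltac:(lia) ltac:(lia) OC) as KC.
    replace (S m - 1)%nat with m in * by lia.
    pose proof (CxN (S m) ltac:(lia)) as Hx. replace (S m - 1)%nat with m in Hx by lia.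
    specialize (KC Hx).
    pose proof (Kminus p gamma w B N A m hp hg hw ltac:(lia) ltac:(lia) OA) as KA.
    pose proof (vv_anti_strict gamma w (A m) (C m) hg hw (Anonneg m ltac:(lia)) Hd).
    assert ((1-p) * uu gamma (C m - C (S m)) <= (1-p) * uu gamma (A m - A (S m)))
      by (apply Rmult_le_compat_l; lra).
    assert (p * vv gamma w (C m) < p * vv gamma w (A m)) by (apply Rmult_lt_compat_l; lra).
    lra. }
  assert (Base : A N < C N /\ uu gamma (C (N-1)%nat - C N) < uu gamma (A (N-1)%nat - A N)).
  { pose proof (CxN (S N) ltac:(lia)) as HxC. replace (S N - 1)%nat with N in HxC by lia.
    assert (HAC : A N < C N) by lra. split; auto.
    pose proof (Kplus p gamma w B (S N) C N hp hg hw HN ltac:(lia) OC HxC) as KC.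
    pose proof (Tplus p gamma w B (S N) C hp hg hw ltac:(lia) OC HCpos) as TC.
    replace (S N - 1)%nat with N in TC by lia.
    pose proof (Tminus p gamma w B N A hp hg hw HN OA) as TA.
    pose proof (vv_anti gamma w (A N) (C (S N)) hg hw (Anonneg N ltac:(lia)) H).
    pose proof (vv_anti_strict gamma w (A N) (C N) hg hw (Anonneg N ltac:(lia)) HAC).
    assert ((1-p) * uu gamma (C N - C (S N)) <= (1-p) * vv gamma w (A N))
      by (apply Rmult_le_compat_l; lra).
    assert (p * vv gamma w (C N) < p * vv gamma w (A N)) by (apply Rmult_lt_compat_l; lra).
    lra. }
  assert (Ind : forall t, (t < N)%nat -> A (N - t)%nat < C (N - t)%nat /\
      uu gamma (C (N - t - 1)%nat - C (N - t)%nat) < uu gamma (A (N - t - 1)%nat - A (N - t)%nat)).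
  { induction t; intros Ht.
    - replace (N - 0)%nat with N by lia. auto.
    - destruct (IHt ltac:(lia)) as [I1 I2].
      destruct (Step (N - t)%nat ltac:(lia) I1 I2) as [S1 S2].
      replace (N - S t)%nat with (N - t - 1)%nat by lia. split; auto. }
  destruct (Ind (N-1)%nat ltac:(lia)) as [I1 I2].
  replace (N - (N - 1))%nat with 1%nat in I1, I2 by lia.
  pose proof (Drop 1%nat ltac:(lia) I1 I2) as Hd. simpl in Hd.
  rewrite A0, C0 in Hd. lra.
Qed.
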